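(* Let $n\ge3$, $K\ge1$, and $\underline a=(a_1,\dots,a_K)\in(\mathbb{C}^\times)^K$ with $a_k\neq a_j^{\pm1}$ for all $k\neq j$. If $a_k\neq\pm1$ for every $k$, then $\psi_{\underline a}:\mathrm{gim}(M_n)\to sl_{2n}^{\oplus K}$ is surjective.
   Context: For $n\geq 3$, $M_n=(m_{i,j})$ is the $n\times n$ integer matrix with $m_{i,i}=2$, $m_{i,i+1}=m_{i+1,i}=-1$ ($1\le i\le n-1$), $m_{1,n}=m_{n,1}=1$, all other entries $0$. $\mathrm{gim}(M_n)$ is the complex Lie algebra generated by $e_i,f_i,h_i$ ($1\le i\le n$) with relations: (R1) $[h_i,e_j]=m_{i,j}e_j$, $[h_i,f_j]=-m_{i,j}f_j$, $[e_i,f_i]=h_i$ for all $i,j$; (R2) for $i\ne j$ with $m_{i,j}\le0$: $[e_i,f_j]=0=[f_i,e_j]$, $(\mathrm{ad}\,e_i)^{1-m_{i,j}}e_j=0=(\mathrm{ad}\,f_i)^{1-m_{i,j}}f_j$; (R3) for $i\ne j$ with $m_{i,j}>0$: $[e_i,e_j]=0=[f_i,f_j]$, $(\mathrm{ad}\,e_i)^{m_{i,j}+1}f_j=0=(\mathrm{ad}\,f_i)^{m_{i,j}+1}e_j$. For $a\in\mathbb{C}^\times$, $\psi_a:\mathrm{gim}(M_n)\to sl_{2n}$ is the Lie algebra homomorphism determined by $\psi_a(e_i)=E_{i,i+1}-E_{n+i+1,n+i}$, $\psi_a(f_i)=E_{i+1,i}-E_{n+i,n+i+1}$ ($1\le i\le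 n-1$), $\psi_a(e_n)=E_{n,n+1}+a^{-1}E_{1,2n}$, $\psi_a(f_n)=E_{n+1,n}+aE_{2n,1}$, where $E_{i,j}$ are matrix units. For $\underline a=(a_1,\dots,a_K)$, $\psi_{\underline a}=\bigoplus_{k=1}^K\psi_{a_k}:\mathrm{gim}(M_n)\to sl_{2n}^{\oplus K}$, $x\mapsto(\psi_{a_1}(x),\dots,\psi_{a_K}(x))$. *)

(* Defs.v *)
From HB Require Import structures.
From mathcomp Require Import all_boot all_order all_algebra.
From mathcomp Require Import complex.
From mathcomp Require Import reals.
Set Implicit Arguments. Unset Strict Implicit. Unset Printing Implicit Defensive.
Import Order.TTheory GRing.Theory Num.Theory.
Local Open Scope ring_scope.
Local Open Scope complex_scope.

Section Defs.
Variables (R : realType) (n : nat).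
Local Notation C := (R[i]).
Local Notation M := 'M[C]_(2 * n).

(* Matrix unit E_{i,j}, with 1-based indices i, j in {1, ..., 2n}. *)
Definition Eu (i j : nat) : M :=
  \matrix_(r, c) (((r : nat) == i.-1) && ((c : nat) == j.-1))%:R.

Definition psi_e (a : C) (i : nat) : M :=
  if (i < n)%N then Eu i i.+1 - Eu (n + i + 1)%N (n + i)%N
  else Eu n n.+1 + a^-1 *: Eu 1 (2 * n)%N.
Definition psi_f (a : C) (i : nat) : M :=
  if (i < n)%N then Eu i.+1 i - Eu (n + i)%N (n + i + 1)%N
  else Eu n.+1 n + a *: Eu (2 * n)%N 1.
Definition psi_h (a : C) (i : nat) : M :=
  psi_e a i *m psi_f a i - psi_f a i *m psi_e a i.
End Defs.

Definition lie_br (R : realType) (n K : nat)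
  (x y : {ffun 'I_K -> 'M[R[i]]_(2 * n)}) : {ffun 'I_K -> 'M[R[i]]_(2 * n)} :=
  [ffun k => x k *m y k - y k *m x k].

Inductive lie_gen (R : realType) (n K : nat)
  (S : {ffun 'I_K -> 'M[R[i]]_(2 * n)} -> Prop)
  : {ffun 'I_K -> 'M[R[i]]_(2 * n)} -> Prop :=
| lie_gen_base x : S x -> lie_gen S x
| lie_gen_zero : lie_gen S 0
| lie_gen_add x y : lie_gen S x -> lie_gen S y -> lie_gen S (x + y)
| lie_gen_scale (c : R[i]) x : lie_gen S x -> lie_gen S (c *: x)
| lie_gen_br x y : lie_gen S x -> lie_gen S y -> lie_gen S (lie_br x y).

Definition psi_gens (R : realType) (n K : nat) (a : 'I_K -> R[i])
  (x : {ffun 'I_K -> 'M[R[i]]_(2 * n)}) : Prop :=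
  exists2 i : nat, (1 <= i <= n)%N &
    [\/ x = [ffun k => psi_e n (a k) i],
        x = [ffun k => psi_f n (a k) i] |
        x = [ffun k => psi_h n (a k) i]].

(* Image of psi_{a} : gim(M_n) -> sl_{2n}^{(+)K}; since gim(M_n) is generated
   as a Lie algebra by the e_i, f_i, h_i, this is the Lie subalgebra generated
   by their images. *)
Definition psi_image (R : realType) (n K : nat) (a : 'I_K -> R[i]) :=
  lie_gen (@psi_gens R n K a).

Definition sl_sum (R : realType) (n K : nat) (x : {ffun 'I_K -> 'M[R[i]]_(2 * n)}) :=
  forall k, \tr (x k) = 0.

(* Main.v *)
Require Import Defs.
From HB Require Import structures.
From mathcomp Require Import all_boot all_order all_algebra.
From mathcomp Require Import complex reals.
From mathcomp Require Import zify ring.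
Set Implicit Arguments. Unset Strict Implicit. Unset Printing Implicit Defensive.
Import Order.TTheory GRing.Theory Num.Theory.
Local Open Scope ring_scope.

Section Infra.
Variables (R : realType) (n : nat).
Local Notation C := (R[i]).
Local Notation M := 'M[C]_(2 * n).
Local Notation E := (@Eu R n).

Definition br (A B : M) : M := A *m B - B *m A.

Lemma Eu_mul p q r s : E p q *m E r s =
  ((q.-1 == r.-1) && (q.-1 < 2 * n)%N)%:R *: E p s.
Proof.
apply/matrixP => x y; rewrite !mxE.
under eq_bigr => t _ do rewrite !mxE.
case: (ltnP q.-1 (2 * n)) => hq.
- rewrite (bigD1 (Ordinal hq)) //= big1 ?addr0; last first.
    by move=> t /negbTE; rewrite -val_eqE /= => ->; rewrite andbF mul0r.
  rewrite eqxx /= andbT.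
  by case: ((x:nat) == p.-1); case: ((y:nat) == s.-1); case: (q.-1 == r.-1) => /=;
     rewrite ?mulr1 ?mul0r ?mulr0.
- rewrite big1 ?andbF ?mul0r // => t _.
  have: (t : nat) != q.-1 by apply/eqP => h; move: (ltn_ord t); rewrite h; lia.
  by move/negbTE ->; rewrite andbF mul0r.
Qed.

Ltac decide_nat :=
  repeat match goal with
  | |- context [@eq_op ?T ?u ?v] =>
       first [ rewrite (_ : (u == v) = true); [| by apply/eqP; lia]
             | rewrite (_ : (u == v) = false); [| by apply/eqP; lia]
             | case: (u =P v) => ? ]
  | |- context [leq ?u ?v] =>
       first [ rewrite (_ : (u <= v)%N = true); [| by lia]
             | rewrite (_ : (u <= v)%N = false); [| by lia]
             | case: (leqP u v) => ? ]
  end.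

Ltac decide_nat0 :=
  repeat match goal with
  | |- context [@eq_op ?T ?u ?v] =>
       first [ rewrite (_ : (u == v) = true); [| by apply/eqP; lia]
             | rewrite (_ : (u == v) = false); [| by apply/eqP; lia] ]
  | |- context [leq ?u ?v] =>
       first [ rewrite (_ : (u <= v)%N = true); [| by lia]
             | rewrite (_ : (u <= v)%N = false); [| by lia] ]
  end.

Ltac distrib := rewrite ?(mulmxDl, mulmxDr, mulmxBl, mulmxBr, mulNmx, mulmxN);
  rewrite -?scalemxAl -?scalemxAr ?Eu_mul.

Ltac mxcomp := distrib; decide_nat0; rewrite /= ?(scale1r, scale0r, addr0, add0r, subr0, sub0r, oppr0);
   apply/matrixP => ? ?; rewrite !mxE; decide_nat; rewrite /=; ring.


Definition Tm : M := E 1 (n+1).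
Definition Tb : M := E (n+1) 1.
Definition H1 : M := E 1 1 - E (n+1) (n+1).
Definition Mm (a : C) m : M := E m (n+1) + a^-1 *: E 1 (n+m).
Definition Nm (a : C) m : M := E (n+1) m + a *: E (n+m) 1.
Definition Zj j : M := E j (n+1) + E 1 (n+j).
Definition Zb j : M := E (n+1) j + E (n+j) 1.

Lemma Ystep m (a : C) : (1 <= m < n)%N -> br (psi_e n a m) (Mm a m.+1) = Mm a m.
Proof. move=> hm; rewrite /br /Mm /psi_e ifT; last by lia. mxcomp. Qed.

Lemma Ytop (a : C) : psi_e n a n = Mm a n.
Proof. rewrite /Mm /psi_e ltnn. mxcomp. Qed.

Lemma Y1 (a : C) : Mm a 1 = (1 + a^-1) *: Tm.
Proof. by rewrite /Mm /Tm scalerDl scale1r addn1. Qed.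

Lemma Fstep m (a : C) : (1 <= m < n)%N -> br (Nm a m.+1) (psi_f n a m) = Nm a m.
Proof. move=> hm; rewrite /br /Nm /psi_f ifT; last by lia. mxcomp. Qed.

Lemma Ftop (a : C) : psi_f n a n = Nm a n.
Proof. rewrite /Nm /psi_f ltnn. mxcomp. Qed.

Lemma F1 (a : C) : Nm a 1 = (1 + a) *: Tb.
Proof. by rewrite /Nm /Tb scalerDl scale1r addn1. Qed.

Lemma brTTb : (1 <= n)%N -> br Tm Tb = H1.
Proof. move=> hn; rewrite /br /Tm /Tb /H1. mxcomp. Qed.

Lemma brH1T : (1 <= n)%N -> br H1 Tm = 2%:R *: Tm.
Proof. move=> hn; rewrite /br /Tm /H1. mxcomp. Qed.

Lemma brH1Tb : (1 <= n)%N -> br H1 Tb = - (2%:R *: Tb).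
Proof. move=> hn; rewrite /br /Tb /H1. mxcomp. Qed.

Lemma Zstep j (a : C) : (2 <= j < n)%N -> br (psi_f n a j) (Zj j) = Zj j.+1.
Proof. move=> hm; rewrite /br /Zj /psi_f ifT; last by lia. mxcomp. Qed.

Lemma Z1 (a : C) : (2 <= n)%N -> br (psi_f n a 1) Tm = Zj 2.
Proof. move=> hm; rewrite /br /Zj /Tm /psi_f ifT; last by lia. mxcomp. Qed.

Lemma Zbstep j (a : C) : (2 <= j < n)%N -> br (Zb j) (psi_e n a j) = Zb j.+1.
Proof. move=> hm; rewrite /br /Zb /psi_e ifT; last by lia. mxcomp. Qed.

Lemma Zb1 (a : C) : (2 <= n)%N -> br Tb (psi_e n a 1) = Zb 2.
Proof. move=> hm; rewrite /br /Zb /Tb /psi_e ifT; last by lia. mxcomp. Qed.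

Lemma H1en (a : C) : (2 <= n)%N -> br H1 (psi_e n a n) = E n (n+1) + a^-1 *: E 1 (n+n).
Proof. move=> hm; rewrite Ytop /br /Mm /H1. mxcomp. Qed.

Lemma H1fn (a : C) : (2 <= n)%N -> br H1 (psi_f n a n) = - (E (n+1) n + a *: E (n+n) 1).
Proof. move=> hm; rewrite Ftop /br /Nm /H1. mxcomp. Qed.

Lemma W1 j (a : C) : (1 <= j < n)%N -> br (psi_e n a j) (E 1 (n + j.+1)) = E 1 (n+j).
Proof. move=> hm; rewrite /br /psi_e ifT; last by lia. mxcomp. Qed.

Lemma W2 j (a : C) : (1 <= j < n)%N -> br (psi_e n a j) (E j.+1 (n + 1)) = E j (n+1).
Proof. move=> hm; rewrite /br /psi_e ifT; last by lia. mxcomp. Qed.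

Lemma W3 j (a : C) : (1 <= j < n)%N -> br (psi_f n a j) (E (n + j.+1) 1) = - E (n+j) 1.
Proof. move=> hm; rewrite /br /psi_f ifT; last by lia. mxcomp. Qed.

Lemma W4 j (a : C) : (1 <= j < n)%N -> br (E (n+1) j.+1) (psi_f n a j) = E (n+1) j.
Proof. move=> hm; rewrite /br /psi_f ifT; last by lia. mxcomp. Qed.

Lemma brE p q r s : (1 <= p <= 2 * n)%N -> (1 <= q <= 2 * n)%N ->
  (1 <= r <= 2 * n)%N -> (1 <= s <= 2 * n)%N ->
  br (E p q) (E r s) = (q == r)%:R *: E p s - (s == p)%:R *: E r q.
Proof. move=> hp hq hr hs; rewrite /br. mxcomp. Qed.

Lemma brZl c A B : br (c *: A) B = c *: br A B.
Proof. by rewrite /br -scalemxAl -scalemxAr scalerBr. Qed.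
Lemma brZr c A B : br A (c *: B) = c *: br A B.
Proof. by rewrite /br -scalemxAl -scalemxAr scalerBr. Qed.
Lemma deltaE (i j : 'I_(2*n)) : delta_mx i j = E i.+1 j.+1.
Proof. by apply/matrixP => x y; rewrite !mxE. Qed.
Lemma diffE (A B : M) c : (A + B) - (A + c *: B) = (1 - c) *: B.
Proof. by rewrite scalerBl scale1r opprD addrACA subrr add0r. Qed.

End Infra.

Section Lie.
Variables (R : realType) (n K : nat) (a : 'I_K -> R[i]).
Hypothesis hn : (3 <= n)%N.
Hypothesis a0 : forall k, a k != 0.
Hypothesis adist : forall k j, k != j -> a k != a j /\ a k != (a j)^-1.
Hypothesis apm : forall k, a k != 1 /\ a k != -1.
Local Notation C := (R[i]).
Local Notation M := 'M[C]_(2 * n).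
Local Notation FM := {ffun 'I_K -> 'M[R[i]]_(2 * n)}.
Local Notation E := (@Eu R n).
Local Notation L := (@psi_image R n K a).
Local Notation br := (@br R n).

Lemma lie_brE (x y : FM) k : lie_br x y k = br (x k) (y k).
Proof. by rewrite ffunE. Qed.

Definition dk k (A : M) : FM := [ffun j => if j == k then A else 0].
Definition S k A := L (dk k A).

Lemma dk0 k : dk k 0 = 0.
Proof. by apply/ffunP => j; rewrite !ffunE; case: ifP. Qed.

Lemma S0 k : S k 0.
Proof. by rewrite /S dk0; apply: lie_gen_zero. Qed.

Lemma S_add k A B : S k A -> S k B -> S k (A + B).
Proof.
move=> hA hB; have := lie_gen_add hA hB; congr lie_gen.
by apply/ffunP => j; rewrite !ffunE; case: ifP; rewrite ?addr0.
Qed.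

Lemma S_scale k c A : S k A -> S k (c *: A).
Proof.
move=> hA; have := lie_gen_scale c hA; congr lie_gen.
by apply/ffunP => j; rewrite !ffunE; case: ifP; rewrite ?scaler0.
Qed.

Lemma S_unscale k c A : c != 0 -> S k (c *: A) -> S k A.
Proof. by move=> hc /(S_scale c^-1); rewrite scalerA mulVf // scale1r. Qed.

Lemma S_opp k A : S k A -> S k (- A).
Proof. by move/(S_scale (-1)); rewrite scaleN1r. Qed.

Lemma S_sub k A B : S k A -> S k B -> S k (A - B).
Proof. by move=> hA /(S_opp) hB; apply: S_add. Qed.

Lemma S_brL k A (X : FM) : S k A -> L X -> S k (br (X k) A).
Proof.
move=> hA hX; have := lie_gen_br hX hA; congr lie_gen.
apply/ffunP => j; rewrite !ffunE; case: (j =P k) => [->|_] //.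
by rewrite /br mulmx0 mul0mx subrr.
Qed.

Lemma S_brR k A (X : FM) : S k A -> L X -> S k (br A (X k)).
Proof.
move=> hA hX; have := lie_gen_br hA hX; congr lie_gen.
apply/ffunP => j; rewrite !ffunE; case: (j =P k) => [->|_] //.
by rewrite /br mulmx0 mul0mx subrr.
Qed.

Lemma S_br k A B : S k A -> S k B -> S k (br A B).
Proof. by move=> hA hB; have := S_brR hA hB; rewrite ffunE eqxx. Qed.

Lemma L_e i : (1 <= i <= n)%N -> L [ffun k => psi_e n (a k) i].
Proof. by move=> hi; apply: lie_gen_base; exists i => //; apply: Or31. Qed.

Lemma L_f i : (1 <= i <= n)%N -> L [ffun k => psi_f n (a k) i].
Proof. by move=> hi; apply: lie_gen_base; exists i => //; apply: Or32. Qed.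

Lemma S_eL k A i : (1 <= i <= n)%N -> S k A -> S k (br (psi_e n (a k) i) A).
Proof. by move=> hi hA; have := S_brL hA (L_e hi); rewrite ffunE. Qed.
Lemma S_fL k A i : (1 <= i <= n)%N -> S k A -> S k (br (psi_f n (a k) i) A).
Proof. by move=> hi hA; have := S_brL hA (L_f hi); rewrite ffunE. Qed.
Lemma S_eR k A i : (1 <= i <= n)%N -> S k A -> S k (br A (psi_e n (a k) i)).
Proof. by move=> hi hA; have := S_brR hA (L_e hi); rewrite ffunE. Qed.
Lemma S_fR k A i : (1 <= i <= n)%N -> S k A -> S k (br A (psi_f n (a k) i)).
Proof. by move=> hi hA; have := S_brR hA (L_f hi); rewrite ffunE. Qed.

Lemma walk_down (P : nat -> Prop) : P n ->
  (forall j, (1 <= j < n)%N -> P j.+1 -> P j) -> forall j, (1 <= j <= n)%N -> P j.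
Proof.
move=> Pn step.
have H : forall t, (t < n)%N -> P (n - t)%N.
  elim => [|t IH] ht; first by rewrite subn0.
  apply: step; first by lia.
  have -> : (n - t.+1).+1 = (n - t)%N by lia.
  by apply: IH; lia.
move=> j hj; have -> : j = (n - (n - j))%N by lia.
by apply: H; lia.
Qed.

Lemma walk_up (P : nat -> Prop) lo : P lo ->
  (forall j, (lo <= j < n)%N -> P j -> P j.+1) -> forall j, (lo <= j <= n)%N -> P j.
Proof.
move=> Plo step.
have H : forall t, (lo + t <= n)%N -> P (lo + t)%N.
  elim => [|t IH] ht; first by rewrite addn0.
  rewrite addnS; apply: step; first by lia.
  by apply: IH; lia.
move=> j hj; have -> : j = (lo + (j - lo))%N by lia.
by apply: H; lia.
Qed.

Lemma LY m : (1 <= m <= n)%N -> L [ffun k => Mm n (a k) m].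
Proof.
move: m; apply: (walk_down (P := fun m => L [ffun k => Mm n (a k) m])).
  have -> : [ffun k => Mm n (a k) n] = [ffun k => psi_e n (a k) n].
    by apply/ffunP => k; rewrite !ffunE Ytop.
  by apply: L_e; lia.
move=> j hj IH; have := lie_gen_br (L_e (i:=j) _) IH.
have hj' : (1 <= j <= n)%N by lia.
move/(_ hj'); congr lie_gen.
by apply/ffunP => k; rewrite lie_brE !ffunE Ystep.
Qed.

Lemma LF m : (1 <= m <= n)%N -> L [ffun k => Nm n (a k) m].
Proof.
move: m; apply: (walk_down (P := fun m => L [ffun k => Nm n (a k) m])).
  have -> : [ffun k => Nm n (a k) n] = [ffun k => psi_f n (a k) n].
    by apply/ffunP => k; rewrite !ffunE Ftop.
  by apply: L_f; lia.
move=> j hj IH.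
have hj' : (1 <= j <= n)%N by lia.
have := lie_gen_br IH (L_f hj'); congr lie_gen.
by apply/ffunP => k; rewrite lie_brE !ffunE Fstep.
Qed.

Definition al k := 1 + (a k)^-1.
Definition ga k := 1 + a k.
Definition be k := 2%:R * (al k * ga k).

Definition Ye : FM := [ffun k => al k *: Tm R n].
Definition Yf : FM := [ffun k => ga k *: Tb R n].

Lemma LYe : L Ye.
Proof.
have := LY (m:=1) _; rewrite /= (leq_trans _ hn) //.
move/(_ isT); congr lie_gen; by apply/ffunP => k; rewrite !ffunE Y1.
Qed.

Lemma LYf : L Yf.
Proof.
have := LF (m:=1) _; rewrite /= (leq_trans _ hn) //.
move/(_ isT); congr lie_gen; by apply/ffunP => k; rewrite !ffunE F1.
Qed.

Lemma al_neq0 k : al k != 0.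
Proof.
rewrite /al addrC addr_eq0; apply/negP => /eqP h.
have : a k = -1 by rewrite -[a k]invrK h invrN1.
by move/eqP; rewrite (negbTE (apm k).2).
Qed.

Lemma ga_neq0 k : ga k != 0.
Proof.
rewrite /ga addrC addr_eq0; apply/negP => /eqP h.
by move: (apm k).2; rewrite h eqxx.
Qed.

Lemma two_neq0 : (2%:R : C) != 0.
Proof. by rewrite pnatr_eq0. Qed.

Lemma be_inj k j : k != j -> be k != be j.
Proof.
move=> hkj; apply/negP => /eqP h.
have h' : al k * ga k = al j * ga j by apply: (mulfI two_neq0).
have := adist hkj; set x := a k; set y := a j; case=> hxy hxy'.
have hx : x != 0 := a0 k. have hy : y != 0 := a0 j.
have : (x - y) * (x * y - 1) = x * y * (al k * ga k - al j * ga j).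
  rewrite /al /ga -/x -/y; field; by rewrite hx hy.
rewrite h' subrr mulr0 => /eqP; rewrite mulf_eq0 => /orP [].
  by rewrite subr_eq0 (negbTE hxy).
rewrite subr_eq0 => /eqP hxy1.
have : x = y^-1 by rewrite -[x](mulfK hy) hxy1 mul1r.
by move/eqP; rewrite (negbTE hxy').
Qed.

Definition Phi : FM := lie_br Ye Yf.

Lemma Lpoly (p : {poly C}) : L [ffun k => (p.[be k] * al k) *: Tm R n].
Proof.
elim/poly_ind: p => [|p c IH].
  have -> : [ffun k => (0.[be k] * al k) *: Tm R n] = 0.
    by apply/ffunP => k; rewrite !ffunE horner0 mul0r scale0r.
  exact: lie_gen_zero.
have := lie_gen_add (lie_gen_br (lie_gen_br LYe LYf) IH) (lie_gen_scale c LYe).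
congr lie_gen; apply/ffunP => k; rewrite [LHS]ffunE !lie_brE !ffunE hornerMXaddC.
rewrite !(brZl, brZr) brTTb; last by lia.
rewrite ?(brZl, brZr) brH1T; last by lia.
rewrite !scalerA -scalerDl; congr (_ *: _); rewrite /be; ring.
Qed.

Lemma ST k : S k (Tm R n).
Proof.
pose P := \prod_(j | j != k) (be k - be j).
pose p := (al k * P)^-1 *: \prod_(j | j != k) ('X - (be j)%:P).
have hP : P != 0.
  by apply/prodf_neq0 => j hj; rewrite subr_eq0 be_inj // eq_sym.
have := Lpoly p; rewrite /S; congr lie_gen.
apply/ffunP => j; rewrite !ffunE hornerZ horner_prod.
under eq_bigr do rewrite hornerXsubC.
case: (j =P k) => [->|/eqP hjk].
  by rewrite -/P -mulrA (mulrC P) mulVf ?scale1r // mulf_neq0 // al_neq0.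
by rewrite (bigD1 j) //= subrr mul0r mulr0 mul0r scale0r.
Qed.

Lemma STb_H1 k : S k (Tb R n) /\ S k (H1 R n).
Proof.
have h1 : S k (H1 R n).
  have := S_brR (ST k) LYf; rewrite ffunE brZr brTTb; last by lia.
  exact: S_unscale (ga_neq0 k).
split => //.
have := S_brR h1 LYf; rewrite ffunE brZr brH1Tb; last by lia.
rewrite scalerN scalerA -scaleNr => h; apply: (S_unscale _ h).
by rewrite oppr_eq0 mulf_neq0 // ?ga_neq0 // two_neq0.
Qed.

Lemma SZ k j : (2 <= j <= n)%N -> S k (Zj R n j).
Proof.
move: j; apply: (walk_up (P := fun j => S k (Zj R n j))).
  rewrite -(Z1 (a k)); last by lia.
  by apply: S_fL; [lia | exact: ST].
move=> j hj IH; rewrite -(Zstep (a k)) //.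
by apply: S_fL => //; lia.
Qed.

Lemma SZb k j : (2 <= j <= n)%N -> S k (Zb R n j).
Proof.
move: j; apply: (walk_up (P := fun j => S k (Zb R n j))).
  rewrite -(Zb1 (a k)); last by lia.
  by apply: S_eR; [lia | exact: (STb_H1 k).1].
move=> j hj IH; rewrite -(Zbstep (a k)) //.
by apply: S_eR => //; lia.
Qed.

Lemma S_top k : S k (E 1 (n + n)) /\ S k (E n (n + 1)).
Proof.
have hZ := SZ k (j := n) ltac:(lia).
have hH : S k (br (H1 R n) (psi_e n (a k) n)).
  by apply: S_eR; [lia | exact: (STb_H1 k).2].
rewrite H1en in hH; last by lia.
have h1 : S k (E 1 (n + n)).
  have := S_sub hZ hH; rewrite /Zj diffE; move=> h; apply: (S_unscale _ h).
  rewrite subr_eq0 eq_sym invr_eq1; exact: (apm k).1.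
split => //; have := S_sub hZ h1; rewrite /Zj addrK //.
Qed.

Lemma S_bot k : S k (E (n + n) 1) /\ S k (E (n + 1) n).
Proof.
have hZ := SZb k (j := n) ltac:(lia).
have hH : S k (br (H1 R n) (psi_f n (a k) n)).
  by apply: S_fR; [lia | exact: (STb_H1 k).2].
rewrite H1fn in hH; last by lia.
have h1 : S k (E (n + n) 1).
  have := S_add hZ hH; rewrite /Zb diffE; move=> h; apply: (S_unscale _ h).
  rewrite subr_eq0 eq_sym; exact: (apm k).1.
split => //; have := S_sub hZ h1; rewrite /Zb addrK //.
Qed.

Lemma SW1 k j : (1 <= j <= n)%N -> S k (E 1 (n + j)).
Proof.
move: j; apply: (walk_down (P := fun j => S k (E 1 (n + j)))).
  exact: (S_top k).1.
move=> j hj IH; rewrite -(W1 (a k)) //; apply: S_eL => //; lia.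
Qed.

Lemma SW2 k j : (1 <= j <= n)%N -> S k (E j (n + 1)).
Proof.
move: j; apply: (walk_down (P := fun j => S k (E j (n + 1)))).
  exact: (S_top k).2.
move=> j hj IH; rewrite -(W2 (a k)) //; apply: S_eL => //; lia.
Qed.

Lemma SW3 k j : (1 <= j <= n)%N -> S k (E (n + j) 1).
Proof.
move: j; apply: (walk_down (P := fun j => S k (E (n + j) 1))).
  exact: (S_bot k).1.
move=> j hj IH; rewrite -[E _ _]opprK -(W3 (a k)) //; apply: S_opp; apply: S_fL => //; lia.
Qed.

Lemma SW4 k j : (1 <= j <= n)%N -> S k (E (n + 1) j).
Proof.
move: j; apply: (walk_down (P := fun j => S k (E (n + 1) j))).
  exact: (S_bot k).2.
move=> j hj IH; rewrite -(W4 (a k)) //; apply: S_fR => //; lia.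
Qed.

Lemma brE1 p q r : (1 <= p <= 2 * n)%N -> (1 <= q <= 2 * n)%N ->
  (1 <= r <= 2 * n)%N -> r != p -> br (E p q) (E q r) = E p r.
Proof.
move=> hp hq hr hrp; rewrite brE // eqxx (negbTE hrp) scale1r scale0r subr0 //.
Qed.

Lemma SBR k q q' : (n + 1 <= q <= 2 * n)%N -> (n + 1 <= q' <= 2 * n)%N -> q != q' ->
  S k (E q q').
Proof.
move=> hq hq' hqq.
have hb : br (E q 1) (E 1 q') = E q q' by apply: brE1; [lia|lia|lia|rewrite eq_sym].
rewrite -hb.
apply: S_br.
  have := SW3 k (j := q - n) ltac:(lia); have -> // : (n + (q - n))%N = q by lia.
have := SW1 k (j := q' - n) ltac:(lia); have -> // : (n + (q' - n))%N = q' by lia.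
Qed.

Lemma STL k p p' : (1 <= p <= n)%N -> (1 <= p' <= n)%N -> p != p' -> S k (E p p').
Proof.
move=> hp hp' hpp.
have hb : br (E p (n + 1)) (E (n + 1) p') = E p p' by apply: brE1; [lia|lia|lia|rewrite eq_sym].
rewrite -hb.
by apply: S_br; [apply: SW2 | apply: SW4].
Qed.

Lemma SU k p q : (1 <= p <= 2 * n)%N -> (1 <= q <= 2 * n)%N -> p != q -> S k (E p q).
Proof.
move=> hp hq hpq.
case: (leqP p n) => hpn; case: (leqP q n) => hqn.
- by apply: STL => //; lia.
- case: (q =P n + 1) => [->|/eqP hq1]; first by apply: SW2; lia.
  have hb : br (E p (n + 1)) (E (n + 1) q) = E p q by apply: brE1; [lia|lia|lia|apply/eqP; lia].
  rewrite -hb.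
  apply: S_br; first by apply: SW2; lia.
  by apply: SBR; [lia | lia | rewrite eq_sym].
- case: (p =P n + 1) => [->|/eqP hp1]; first by apply: SW4; lia.
  have hb : br (E p (n + 1)) (E (n + 1) q) = E p q by apply: brE1; [lia|lia|lia|apply/eqP; lia].
  rewrite -hb.
  apply: S_br; last by apply: SW4; lia.
  by apply: SBR; [lia | lia | done].
- by apply: SBR => //; lia.
Qed.

Lemma SD k p q : (1 <= p <= 2 * n)%N -> (1 <= q <= 2 * n)%N -> p != q ->
  S k (E p p - E q q).
Proof.
move=> hp hq hpq.
have -> : E p p - E q q = br (E p q) (E q p).
  by rewrite brE // !eqxx !scale1r.
by apply: S_br; apply: SU => //; rewrite eq_sym.
Qed.

Lemma S_all k (A : M) : \tr A = 0 -> S k A.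
Proof.
move=> htr.
have h0 : (0 < 2 * n)%N by lia.
pose i0 : 'I_(2 * n) := Ordinal h0.
pose D (i j : 'I_(2 * n)) : M := delta_mx i j - (i == j)%:R *: delta_mx i0 i0.
have -> : A = \sum_i \sum_j A i j *: D i j.
  have hz : \sum_(i < 2 * n) \sum_(j < 2 * n) A i j *: ((i == j)%:R *: delta_mx i0 i0) = 0.
    rewrite (eq_bigr (fun i => A i i *: delta_mx i0 i0)); last first.
      move=> i _; rewrite (bigD1 i) //= eqxx scale1r big1 ?addr0 // => j.
      by rewrite eq_sym => /negbTE ->; rewrite scale0r scaler0.
    by rewrite -scaler_suml -[X in X *: _]/(\tr A) htr scale0r.
  rewrite /D.
  under eq_bigr do under eq_bigr do rewrite scalerBr.
  under eq_bigr do rewrite sumrB.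
  by rewrite sumrB hz subr0 -matrix_sum_delta.
apply: (big_ind (S k)); [exact: S0 | exact: S_add | move=> i _].
apply: (big_ind (S k)); [exact: S0 | exact: S_add | move=> j _].
apply: S_scale; rewrite /D.
case: (i =P j) => [<-|/eqP hij].
  rewrite scale1r; case: (i =P i0) => [->|/eqP hi0]; first by rewrite subrr; exact: S0.
  rewrite !deltaE; apply: SD; [have := ltn_ord i; lia | have := ltn_ord i0; lia | ].
  by apply/negP => /eqP [] h; move/negP: hi0; apply; apply/eqP/val_inj.
rewrite scale0r subr0 deltaE; apply: SU; [have := ltn_ord i; lia | have := ltn_ord j; lia | ].
by apply/negP => /eqP [] h; move/negP: hij; apply; apply/eqP/val_inj.
Qed.

Lemma final (x : FM) : sl_sum x -> L x.
Proof.
move=> hx.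
have -> : x = \sum_k dk k (x k).
  apply/ffunP => j; rewrite sum_ffunE (bigD1 j) //= ffunE eqxx big1 ?addr0 // => k.
  by rewrite ffunE eq_sym => /negbTE ->.
apply: (big_ind L); [exact: lie_gen_zero | exact: lie_gen_add | move=> k _].
exact: S_all.
Qed.

End Lie.

Theorem lemma5p1 (R : realType) (n K : nat) (a : 'I_K -> R[i]) :
  (3 <= n)%N -> (1 <= K)%N ->
  (forall k, a k != 0) ->
  (forall k j, k != j -> a k != a j /\ a k != (a j)^-1) ->
  (forall k, a k != 1 /\ a k != -1) ->
  forall x : {ffun 'I_K -> 'M[R[i]]_(2 * n)},
    @sl_sum R n K x -> @psi_image R n K a x.
Proof.
move=> hn _ ha0 hdist hpm x hx.
exact: (final hn ha0 hdist hpm hx).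
Qed.
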